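(* Let $N\ge 5$ be odd, and let $G_{N,1}$ be the graph with vertex set $\mathbb Z_N=\{0,1,\dots,N-1\}$ in which two distinct vertices $i,j$ are adjacent if and only if $j-i\not\equiv\pm1\pmod N$. Put $\Delta=\sqrt{N(N-4)}$ and $\rho=\frac{N-2+\Delta}{2}$. For $u,v\in\mathbb Z_N$ let $q\in\{0,1,\dots,N-1\}$ with $q\equiv v-u\pmod N$. Then the effective resistance between $u$ and $v$ in $G_{N,1}$ (all edges of unit conductance) is \[ R^{(1)}(u,v)=\frac{2}{\Delta(\rho^N+1)}\left\{\rho^N-1+(-1)^q(\rho^q-\rho^{N-q})\right\}. \] Moreover, the right-hand side is invariant under $q\mapsto N-q$, so the resistance depends only on $h(u,v)=\min\{q,N-q\}$, and $R^{(1)}(u,v)>0$ whenever $u\ne v$.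
   Context: The effective resistance is that of the electrical network obtained by placing a unit resistor on each edge; equivalently $R(u,v)=(e_u-e_v)^T L^{+}(e_u-e_v)$ with $L^+$ the Moore–Penrose pseudoinverse of the Laplacian. *)

(* Defs.v *)
From HB Require Import structures.
From mathcomp Require Import all_boot all_order all_algebra.
Set Implicit Arguments. Unset Strict Implicit. Unset Printing Implicit Defensive.
Import Order.TTheory GRing.Theory Num.Theory.
Local Open Scope ring_scope.

Definition cdiff (N : nat) (i j : 'I_N) : nat := ((j + N - i) %% N)%N.

Definition adjG1 (N : nat) (i j : 'I_N) : bool :=
  [&& i != j, cdiff i j != 1%N & cdiff i j != (N - 1)%N].

Definition lapG1 (R : nzRingType) (N : nat) : 'M[R]_N :=
  \matrix_(i, j) (if i == j then (#|[pred k | adjG1 i k]|)%:R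
                  else - (adjG1 i j)%:R).

Definition is_MP_pinv (R : nzRingType) (n : nat) (A X : 'M[R]_n) : Prop :=
  [/\ A *m X *m A = A, X *m A *m X = X,
      (A *m X)^T = A *m X & (X *m A)^T = X *m A].

Definition quad_res (R : nzRingType) (n : nat) (X : 'M[R]_n) (u v : 'I_n) : R :=
  let e : 'cV[R]_n := delta_mx u 0 - delta_mx v 0 in
  (e^T *m X *m e) 0 0.

Definition Delta1 (R : rcfType) (N : nat) : R := Num.sqrt ((N * (N - 4))%N)%:R.
Definition rho1 (R : rcfType) (N : nat) : R := (N%:R - 2 + Delta1 R N) / 2.
Definition R1formula (R : rcfType) (N q : nat) : R :=
  2 / (Delta1 R N * (rho1 R N ^+ N + 1)) *
  (rho1 R N ^+ N - 1 + (-1) ^+ q * (rho1 R N ^+ q - rho1 R N ^+ (N - q))).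

(* Main.v *)
Require Import Defs.
From mathcomp Require Import all_boot all_order all_algebra.
From mathcomp Require Import zify ring lra.
Set Implicit Arguments. Unset Strict Implicit. Unset Printing Implicit Defensive.
Import Order.TTheory GRing.Theory Num.Theory.
Local Open Scope ring_scope.

Section Comb.
Variable N : nat.
Hypothesis N3 : (3 <= N)%N.

Lemma cdiffE (i j : 'I_N) : cdiff i j = if (i <= j)%N then (j - i)%N else (j + N - i)%N.
Proof.
rewrite /cdiff; have hi := ltn_ord i; have hj := ltn_ord j.
case: leqP => h.
  have -> : (j + N - i = (j - i) + N)%N by lia.
  by rewrite modnDr modn_small //; lia.
by rewrite modn_small //; lia.
Qed.

Lemma ordSE (i : 'I_N) : nat_of_ord (ordS i) = if i.+1 == N then 0%N else i.+1.
Proof.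
rewrite /= ; have hi := ltn_ord i; case: eqP => [->|h]; first by rewrite modnn.
by rewrite modn_small //; lia.
Qed.

Lemma ord_predE (i : 'I_N) : nat_of_ord (ord_pred i) = if nat_of_ord i == 0%N then (N - 1)%N else (i - 1)%N.
Proof.
rewrite /= ; have hi := ltn_ord i; case: eqP => [->|h].
  by rewrite add0n modn_small //; lia.
have -> : ((i + N).-1 = (i - 1) + N)%N by lia.
by rewrite modnDr modn_small //; lia.
Qed.

Lemma cdiff1 (i k : 'I_N) : (cdiff i k == 1%N) = (k == ordS i).
Proof.
apply/eqP/eqP => [h|->].
  apply/val_inj; move: h; change (\val k = \val (ordS i)) with (nat_of_ord k = nat_of_ord (ordS i)); rewrite cdiffE ordSE.
  have := ltn_ord i; have := ltn_ord k.
  case: (leqP i k); case: eqP; move=> *; lia.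
rewrite cdiffE ordSE; have := ltn_ord i.
case: eqP => h1; case: ifP; move=> *; lia.
Qed.

Lemma cdiffN1 (i k : 'I_N) : (cdiff i k == (N - 1)%N) = (k == ord_pred i).
Proof.
apply/eqP/eqP => [h|->].
  apply/val_inj; move: h; change (\val k = \val (ord_pred i)) with (nat_of_ord k = nat_of_ord (ord_pred i)); rewrite cdiffE ord_predE.
  have := ltn_ord i; have := ltn_ord k.
  case: (leqP i k); case: eqP; move=> *; lia.
rewrite cdiffE ord_predE; have := ltn_ord i.
case: eqP => h1; case: ifP; move=> *; lia.
Qed.

Lemma ordS_neq (i : 'I_N) : (ordS i == i) = false.
Proof. apply/eqP => /(congr1 (@nat_of_ord N)); rewrite ordSE; have := ltn_ord i; case: eqP; move=> *; lia. Qed.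
Lemma ord_pred_neq (i : 'I_N) : (ord_pred i == i) = false.
Proof. apply/eqP => /(congr1 (@nat_of_ord N)); rewrite ord_predE; have := ltn_ord i; case: eqP; move=> *; lia. Qed.
Lemma ordS_pred_neq (i : 'I_N) : (ordS i == ord_pred i) = false.
Proof. apply/eqP => /(congr1 (@nat_of_ord N)); rewrite ord_predE ordSE; have := ltn_ord i; do 2 case: eqP; move=> *; lia. Qed.

Lemma cdiff0 (i k : 'I_N) : (cdiff i k == 0%N) = (k == i).
Proof.
apply/eqP/eqP => [h|->]; last by rewrite cdiffE leqnn subnn.
apply/val_inj; move: h; change (\val k = \val i) with (nat_of_ord k = nat_of_ord i); rewrite cdiffE; have := ltn_ord i; have := ltn_ord k.
case: (leqP i k); move=> *; lia.
Qed.

Lemma adj_ind (R : nzRingType) (i k : 'I_N) :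
  (adjG1 i k)%:R = 1 - (k == i)%:R - (k == ordS i)%:R - (k == ord_pred i)%:R :> R.
Proof.
rewrite /adjG1 cdiff1 cdiffN1 (eq_sym i k).
have [->|ki] := eqVneq k i.
  by rewrite /= (eq_sym i) ordS_neq (eq_sym i) ord_pred_neq /= subrr !subr0.
rewrite /= subr0.
have [kS|kS] := eqVneq k (ordS i).
  by rewrite kS ordS_pred_neq /= subr0 subrr.
have [kP|kP] := eqVneq k (ord_pred i).
  by rewrite /= !subr0 subrr.
by rewrite /= !subr0.
Qed.


Lemma sum_delta (R : nzRingType) (a : 'I_N) (f : 'I_N -> R) :
  \sum_k (k == a)%:R * f k = f a.
Proof.
rewrite (bigD1 a) //= eqxx mul1r big1 ?addr0 // => k /negbTE ->; by rewrite mul0r.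
Qed.

Lemma sum_delta1 (R : nzRingType) (a : 'I_N) :
  \sum_k (k == a)%:R = 1 :> R.
Proof.
rewrite (bigD1 a) //= eqxx big1 ?addr0 // => k /negbTE ->; by [].
Qed.

Lemma cdiffS (i j : 'I_N) : cdiff (ordS i) j =
  if cdiff i j == 0%N then (N - 1)%N else (cdiff i j - 1)%N.
Proof.
rewrite !cdiffE ordSE; have := ltn_ord i; have := ltn_ord j.
case: (leqP i j) => h1; repeat case: ifP; move=> *; lia.
Qed.

Lemma cdiffP (i j : 'I_N) : cdiff (ord_pred i) j =
  if (cdiff i j).+1 == N then 0%N else (cdiff i j).+1.
Proof.
rewrite !cdiffE ord_predE; have := ltn_ord i; have := ltn_ord j.
case: (leqP i j) => h1; repeat case: ifP; move=> *; lia.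
Qed.

Lemma cdiff_sym (i j : 'I_N) : cdiff j i = if i == j then 0%N else (N - cdiff i j)%N.
Proof.
case: eqP => [->|h]; first by apply/eqP; rewrite cdiff0.
have h' : (nat_of_ord i != nat_of_ord j) by apply/eqP => /val_inj.
move: h'; rewrite !cdiffE; have := ltn_ord i; have := ltn_ord j.
case: (leqP i j) => h1; case: (leqP j i) => h2; move=> ? ? /eqP ?; lia.
Qed.

Lemma cdiffxx (i : 'I_N) : cdiff i i = 0%N.
Proof. by rewrite cdiffE leqnn subnn. Qed.

Lemma cdiff_lt (i j : 'I_N) : (cdiff i j < N)%N.
Proof. by rewrite /cdiff ltn_mod; lia. Qed.

End Comb.

Section Mat.
Variable R : realFieldType.
Variable N : nat.
Hypothesis N3 : (3 <= N)%N.
Variable g : nat -> R.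
Hypothesis gsym : forall q, (q <= N)%N -> g (N - q)%N = g q.
Hypothesis grec : forall q, (q < N)%N ->
  (N%:R - 2) * g q + g (if q == 0%N then (N - 1)%N else (q - 1)%N)
   + g (if q.+1 == N then 0%N else q.+1) = (q == 0%N)%:R.

Definition Kmx : 'M[R]_N := \matrix_(i, k)
  ((N%:R - 2) * (k == i)%:R + (k == ordS i)%:R + (k == ord_pred i)%:R).
Definition Jm : 'M[R]_N := const_mx 1.
Definition Gm : 'M[R]_N := \matrix_(i, j) g (cdiff i j).

Lemma L_eq : lapG1 R N = Kmx - Jm.
Proof.
apply/matrixP => i k; rewrite !mxE.
have [->|ki] := eqVneq i k.
  rewrite -sum1_card natr_sum big_mkcond /=.
  rewrite (eq_bigr (fun j => (adjG1 k j)%:R)); last by move=> j _; rewrite inE; case: adjG1.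
  under eq_bigr => j _ do rewrite adj_ind //.
  rewrite !sumrB !sum_delta1 sumr_const card_ord (eq_sym k) ordS_neq // (eq_sym k) ord_pred_neq //.
  rewrite mulr1 !addr0 -[1 *+ N]/(N%:R); lra.
rewrite adj_ind // (eq_sym k i) (negbTE ki) mulr0 add0r (_ : false%:R = 0 :> R) //; lra.
Qed.

Lemma Kmx_sym : Kmx^T = Kmx.
Proof.
apply/matrixP => i k; rewrite !mxE (eq_sym i k).
have e1 : (i == ordS k) = (k == ord_pred i).
  apply/eqP/eqP => [->|->]; [by rewrite ordSK | by rewrite ord_predK].
have e2 : (i == ord_pred k) = (k == ordS i).
  apply/eqP/eqP => [->|->]; [by rewrite ord_predK | by rewrite ordSK].
rewrite e1 e2; lra.
Qed.

Lemma KJ : Kmx *m Jm = N%:R *: Jm.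
Proof.
apply/matrixP => i j; rewrite !mxE.
under eq_bigr => k _ do rewrite !mxE mulr1.
rewrite !big_split /= -mulr_sumr !sum_delta1 mulr1; lra.
Qed.

Lemma trJ : Jm^T = Jm.
Proof. by apply/matrixP => i j; rewrite !mxE. Qed.

Lemma JK : Jm *m Kmx = N%:R *: Jm.
Proof. by rewrite -[Jm *m Kmx]trmxK trmx_mul trJ Kmx_sym KJ linearZ /= trJ. Qed.

Lemma JJ : Jm *m Jm = N%:R *: Jm.
Proof.
apply/matrixP => i j; rewrite !mxE.
under eq_bigr => k _ do rewrite !mxE mulr1.
by rewrite sumr_const card_ord mulr1.
Qed.

Lemma Gsym : Gm^T = Gm.
Proof.
apply/matrixP => i j; rewrite !mxE cdiff_sym //.
case: eqP => [->|_]; first by rewrite cdiffxx.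
by rewrite gsym // ltnW // cdiff_lt.
Qed.

Lemma KG : Kmx *m Gm = 1%:M.
Proof.
apply/matrixP => i j; rewrite !mxE.
under eq_bigr => k _ do rewrite !mxE mulrDl mulrDl -mulrA.
rewrite !big_split /= -mulr_sumr !sum_delta cdiffS // cdiffP //.
rewrite grec ?cdiff_lt // cdiff0 //.
by rewrite eq_sym.
Qed.


Lemma N0 : N%:R != 0 :> R.
Proof. by rewrite pnatr_eq0; lia. Qed.

Lemma GK : Gm *m Kmx = 1%:M.
Proof. exact: mulmx1C KG. Qed.

Lemma JG : Jm *m Gm = N%:R^-1 *: Jm.
Proof.
have hJ : Jm = N%:R^-1 *: (Jm *m Kmx) by rewrite JK scalerA mulVf ?N0 // scale1r.
by rewrite {1}hJ -scalemxAl -mulmxA KG mulmx1.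
Qed.

Lemma GJ : Gm *m Jm = N%:R^-1 *: Jm.
Proof.
have hJ : Jm = N%:R^-1 *: (Kmx *m Jm) by rewrite KJ scalerA mulVf ?N0 // scale1r.
by rewrite {1}hJ -scalemxAr mulmxA GK mul1mx.
Qed.

Definition Xm : 'M[R]_N := Gm - (N%:R^-1 * N%:R^-1) *: Jm.
Definition Pm : 'M[R]_N := 1%:M - N%:R^-1 *: Jm.

Lemma LX : lapG1 R N *m Xm = Pm.
Proof.
rewrite L_eq /Xm /Pm mulmxBl !mulmxBr -!scalemxAr KG KJ JG JJ.
by rewrite opprB addrA subrK.
Qed.

Lemma XL : Xm *m lapG1 R N = Pm.
Proof.
by rewrite L_eq /Xm /Pm mulmxBl !mulmxBr -!scalemxAl GK GJ JK JJ subrr subr0.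
Qed.

Lemma PL : Pm *m lapG1 R N = lapG1 R N.
Proof.
by rewrite /Pm mulmxBl mul1mx -scalemxAl L_eq mulmxBr JK JJ subrr scaler0 subr0.
Qed.

Lemma PX : Pm *m Xm = Xm.
Proof.
rewrite /Pm /Xm mulmxBl mul1mx -scalemxAl mulmxBr -scalemxAr JG JJ scalerA.
by rewrite -mulrA mulVf ?N0 // mulr1 subrr scaler0 subr0.
Qed.

Lemma trP : Pm^T = Pm.
Proof. by rewrite /Pm linearB /= trmx1 linearZ /= trJ. Qed.

Lemma MP_exists : is_MP_pinv (lapG1 R N) Xm.
Proof.
split; first by rewrite LX PL.
- by rewrite XL PX.
- by rewrite LX trP.
- by rewrite XL trP.
Qed.

Lemma trL : (lapG1 R N)^T = lapG1 R N.
Proof. by rewrite L_eq linearB /= Kmx_sym trJ. Qed.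

Lemma quad_indep (X : 'M[R]_N) (u v : 'I_N) :
  lapG1 R N *m X *m lapG1 R N = lapG1 R N ->
  let e : 'cV[R]_N := delta_mx u 0 - delta_mx v 0 in
  e^T *m X *m e = e^T *m Gm *m e.
Proof.
move=> hX e.
have Je : Jm *m e = 0.
  by rewrite /e mulmxBr -!colE !col_const subrr.
have he : e = lapG1 R N *m (Gm *m e).
  by rewrite L_eq mulmxBl mulmxA KG mul1mx mulmxA JG -scalemxAl Je scaler0 subr0.
set L := lapG1 R N; set y := Gm *m e.
transitivity ((L *m y)^T *m X *m (L *m y)); first by rewrite -he.
have -> : (L *m y)^T *m X *m (L *m y) = y^T *m (L^T *m X *m L) *m y.
  by rewrite trmx_mul !mulmxA.
rewrite trL hX -mulmxA -he /y trmx_mul Gsym.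
by [].
Qed.


Lemma delta_entry (A : 'M[R]_N) (a b : 'I_N) :
  ((delta_mx 0 a : 'rV[R]_N) *m A *m (delta_mx b 0 : 'cV[R]_N)) 0 0 = A a b.
Proof. by rewrite -(rowE a A) -(colE b (row a A)) !mxE. Qed.

Lemma delta_entry' (A : 'M[R]_N) (a b : 'I_N) :
  ((delta_mx 0 a : 'rV[R]_N) *m A *m (delta_mx b 0 : 'cV[R]_N)) = (A a b)%:M.
Proof. by apply/matrixP => i j; rewrite !ord1 delta_entry mxE eqxx mulr1n. Qed.

Lemma quadG (u v : 'I_N) :
  let e : 'cV[R]_N := delta_mx u 0 - delta_mx v 0 in
  (e^T *m Gm *m e) 0 0 = 2 * (g 0 - g (cdiff u v)).
Proof.
move=> e; rewrite /e [(_ - _)^T]linearB /= !trmx_delta mulmxBl !mulmxBr !mulmxBl !delta_entry' !mxE.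
have hs : g (cdiff v u) = g (cdiff u v).
  rewrite cdiff_sym //; case: eqP => [->|_]; first by rewrite cdiffxx.
  by rewrite gsym // ltnW // cdiff_lt.
rewrite !eqxx !mulr1n hs !cdiffxx //; lra.
Qed.

End Mat.
Section Real.
Variable R : rcfType.
Variable N : nat.
Hypothesis hodd : odd N.
Hypothesis h5 : (5 <= N)%N.

Local Notation D := (Delta1 R N).
Local Notation r := (rho1 R N).
Definition cc : R := (D * (r ^+ N + 1))^-1.
Definition gg (q : nat) : R := cc * ((-1) ^+ q * (r ^+ (N - q) - r ^+ q)).

Lemma D2 : D ^+ 2 = (N%:R - 2) ^+ 2 - 4.
Proof.
rewrite /Delta1 sqr_sqrtr ?ler0n // natrM natrB; last by lia.
ring.
Qed.

Lemma Dpos : 0 < D.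
Proof. by rewrite /Delta1 sqrtr_gt0 ltr0n muln_gt0; apply/andP; split; lia. Qed.

Lemma N5R : 5 <= N%:R :> R.
Proof. by rewrite ler_nat. Qed.

Lemma rho_gt1 : 1 < r.
Proof. rewrite /rho1; have := Dpos; have := N5R; lra. Qed.

Lemma rho_eq : r * r - (N%:R - 2) * r + 1 = 0.
Proof.
have h := D2; rewrite /rho1.
have -> : (N%:R - 2 + D) / 2 * ((N%:R - 2 + D) / 2) - (N%:R - 2) * ((N%:R - 2 + D) / 2) + 1
  = (D ^+ 2 - ((N%:R - 2) ^+ 2 - 4)) / 4 by field.
by rewrite h subrr mul0r.
Qed.

Lemma rho_inv : r * ((N%:R - 2 - D) / 2) = 1.
Proof.
have h := D2; rewrite /rho1.
have -> : (N%:R - 2 + D) / 2 * ((N%:R - 2 - D) / 2) = 1 + (((N%:R - 2) ^+ 2 - 4) - D ^+ 2) / 4 by field.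
by rewrite h subrr mul0r addr0.
Qed.

Lemma cc_pos : 0 < cc.
Proof.
rewrite /cc invr_gt0 mulr_gt0 ?Dpos //.
have := rho_gt1 => h; have : 0 < r ^+ N by rewrite exprn_gt0 //; lra.
lra.
Qed.

Lemma signN (q : nat) : (q <= N)%N -> (-1) ^+ (N - q) = - ((-1) ^+ q) :> R.
Proof.
move=> hq; rewrite -signr_odd oddB // hodd -[in RHS]signr_odd.
by case: (odd q); rewrite /= ?expr0 ?expr1 ?opprK.
Qed.

Lemma gsym q : (q <= N)%N -> gg (N - q)%N = gg q.
Proof.
move=> hq; rewrite /gg signN // subKn //; ring.
Qed.


Lemma g0N : gg 0 = gg N.
Proof. by rewrite -(gsym (leqnn N)) subnn. Qed.

Lemma grec_int p m : (N = p + m + 2)%N ->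
  (N%:R - 2) * gg p.+1 + gg p + gg p.+2 = 0.
Proof.
move=> hN; rewrite /gg.
have -> : (N - p.+1 = m.+1)%N by lia.
have -> : (N - p = m.+2)%N by lia.
have -> : (N - p.+2 = m)%N by lia.
rewrite !exprS.
set s := (-1) ^+ p; set x := r ^+ p; set y := r ^+ m.
have -> : (N%:R - 2) * (cc * (- 1 * s * (r * y - r * x))) +
   cc * (s * (r * (r * y) - x)) + cc * (- 1 * (- 1 * s) * (y - r * (r * x)))
   = cc * s * (y - x) * (r * r - (N%:R - 2) * r + 1) by ring.
by rewrite rho_eq mulr0.
Qed.

Lemma grec q : (q < N)%N ->
  (N%:R - 2) * gg q + gg (if q == 0%N then (N - 1)%N else (q - 1)%N)
   + gg (if q.+1 == N then 0%N else q.+1) = (q == 0%N)%:R.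
Proof.
move=> hq; case: q hq => [|p] hp /=.
  have -> : (1 == N) = false by apply/eqP; lia.
  rewrite /gg subn0 expr0 mul1r.
  have e1 : (N - (N-1) = 1)%N by lia.
  have e2 : r ^+ N = r * r ^+ (N-1) by rewrite -exprS; congr (_ ^+ _); lia.
  have e3 : (-1) ^+ (N-1) = 1 :> R.
    by rewrite -signr_odd oddB ?hodd //; lia.
  rewrite e1 e2 e3 expr0 expr1 !mul1r.
  set y := r ^+ (N-1).
  have ypos : 0 < y by rewrite exprn_gt0 //; have := rho_gt1; lra.
  have hb : (N%:R - 2) * (r * y - 1) + 2 * (r - y) = D * (r * y + 1).
    have hi := rho_inv.
    have -> : (N%:R - 2) * (r * y - 1) + 2 * (r - y) = D * (r * y + 1) + 2 * y * (r * ((N%:R - 2 - D) / 2) - 1).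
      by rewrite /rho1; field.
    by rewrite hi subrr mulr0 addr0.
  have -> : (N%:R - 2) * (cc * (r * y - 1)) + cc * (r - y) + cc * (-1 * (y - r))
     = cc * ((N%:R - 2) * (r * y - 1) + 2 * (r - y)) by ring.
  rewrite hb /cc e2 -/y mulVf //.
  have := Dpos; have := rho_gt1 => h1 h2.
  have : 0 < r * y by rewrite mulr_gt0 //; lra.
  move=> hry; have hpos : 0 < D * (r * y + 1) by rewrite mulr_gt0 //; lra.
  by rewrite gt_eqF.
rewrite subn1 /=.
have -> : gg (if p.+2 == N then 0%N else p.+2) = gg p.+2.
  by case: eqP => [h|//]; rewrite g0N -h.
apply: (grec_int (m := (N - p - 2)%N)); lia.
Qed.


Lemma formula q : 2 * (gg 0 - gg q) = R1formula R N q.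
Proof. rewrite /gg /R1formula /cc subn0 expr0 !mul1r; ring. Qed.

Lemma R1sym q : (q <= N)%N -> R1formula R N q = R1formula R N (N - q).
Proof. by move=> hq; rewrite -!formula gsym // leq_subr. Qed.

Lemma R1pos q : (0 < q < N)%N -> 0 < R1formula R N q.
Proof.
case/andP => hq1 hq2; rewrite /R1formula.
have h1 := rho_gt1.
have ea : 1 < r ^+ q by rewrite exprn_egt1 //; lia.
have eb : 1 < r ^+ (N - q) by rewrite exprn_egt1 //; lia.
have eN : r ^+ N = r ^+ q * r ^+ (N - q) by rewrite -exprD subnKC // ltnW.
have c2 : 0 < 2 / (D * (r ^+ N + 1)).
  by rewrite mulr_gt0 // invr_gt0 mulr_gt0 ?Dpos // eN; nra.
apply: mulr_gt0 => //.
rewrite eN -signr_odd; move: ea eb; set a := r ^+ q; set b := r ^+ (N - q) => ea eb.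
case: (odd q); rewrite ?expr0 ?expr1; nra.
Qed.

End Real.

Theorem theorem4p1 (R : rcfType) (N : nat) (hodd : odd N) (h5 : (5 <= N)%N) :
  (exists X : 'M[R]_N, is_MP_pinv (lapG1 R N) X) /\
  (forall X : 'M[R]_N, is_MP_pinv (lapG1 R N) X ->
     forall u v : 'I_N,
       quad_res X u v = R1formula R N (cdiff u v) /\
       quad_res X u v = R1formula R N (minn (cdiff u v) (N - cdiff u v)) /\
       (u != v -> 0 < quad_res X u v)) /\
  (forall q : nat, (q <= N)%N -> R1formula R N q = R1formula R N (N - q)).
Proof.
have N3 : (2 < N)%N by lia.
have gs := gsym R hodd.
have gr := grec R hodd h5.
split; first by exists (Xm N (gg R N)); exact: MP_exists.
split; last by move=> q hq; exact: R1sym.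
move=> X [hX _ _ _] u v.
have hq : quad_res X u v = R1formula R N (cdiff u v).
  by rewrite /quad_res /= (quad_indep N3 gs gr u v hX) (quadG N3 gs) formula.
have hlt := cdiff_lt N3 u v.
split => //; split.
  rewrite hq /minn; case: ltnP => // _.
  by apply: R1sym => //; apply: ltnW.
move=> huv; rewrite hq; apply: R1pos => //.
rewrite hlt andbT lt0n cdiff0 //.
by rewrite eq_sym.
Qed.
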